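(* Let $|A|\ge2$, let $\mathcal F\subseteq\mathcal O(A)$ be a conservative clone with $\mathrm r(\mathcal F)=r\ge3$. Then there exist a Post class $P\in\{O_1,D_1,D_2,L_4\}$ and a surjective map $\tau\colon\mathcal F\to P$ such that for every $B\in[A]^2$, every bijection $\sigma\colon B\to\{0,1\}$, every $n$, every $f\in\mathcal F_{[n]}$ and every $\mathbf a\in B^n$, $$f(\mathbf a)=\sigma^{-1}\big(\tau(f)(\sigma(\mathbf a))\big),$$ where $\sigma(\mathbf a)$ is applied componentwise. Moreover, if $r\ge4$, then $P=O_1$ and every $f\in\mathcal F_{[n]}$ coincides with some projection $e^n_i$ on the set $A^n_{<r}$.
   Context: $\mathcal O(A)=\bigcup_{n<\omega}A^{A^n}$; $\mathcal F_{[n]}=\mathcal F\cap A^{A^n}$. $\mathrm{ran}\,\mathbf a$ is the set of entries of $\mathbf a\in A^n$; $A^n_{<r}=\{\mathbf a\in A^n: |\mathrm{ran}\,\mathbf a|<r\}$; $[A]^2$ the 2-element subsets of $A$. A clone with carrier $A$ is a subset of $\mathcal O(A)$ containing all projections $e^n_i(a_0\dots a_{n-1})=a_i$ and closed under composition. $f$ is conservative if $f(\mathbf a)\in\mathrm{ran}\,\mathbf a$ for all $\mathbf a$; a clone is conservative if all its members are. $\mathrm r(\mathcal F)$ is the least $r$ such that $\mathcal F$ contains an $r$-ary function that is not a projection ($\mathrm r(\mathcal F)=\omega$ if $\mathcal F$ consists of projections only). Post classes are clones on $\{0,1\}$: a Boolean function $g$ is self-dual if $g(1-x_0,\dots,1-x_{n-1})=1-g(x_0,\dots,x_{n-1})$;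 $O_1$ is the set of all Boolean projections; $D_1$ is the set of all self-dual Boolean functions $g$ with $g(0,\dots,0)=0$; $D_2$ is the set of all self-dual monotone Boolean functions; $L_4$ is the clone generated by $x\oplus y\oplus z$ (the functions $x_{i_1}\oplus\dots\oplus x_{i_k}$ with $k$ odd). *)

(* Defs.v *)
From mathcomp Require Import all_boot.
From Stdlib Require Import List.
Set Implicit Arguments. Unset Strict Implicit. Unset Printing Implicit Defensive.

Definition op (A : Type) (n : nat) : Type := ('I_n -> A) -> A.
Definition boolop (n : nat) : Type := ('I_n -> bool) -> bool.

(* a family of operations, i.e. a subset of O(A), given arity-wise: F n = F_[n] *)
Definition opset (A : Type) : Type := forall n : nat, op A n -> Prop.

Definition is_projection (A : Type) (n : nat) (f : op A n) : Prop :=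
  exists i : 'I_n, forall a : 'I_n -> A, f a = a i.

Definition is_clone (A : Type) (F : opset A) : Prop :=
  (forall n (i : 'I_n), F n (fun a => a i)) /\
  (forall m n (f : op A m) (g : 'I_m -> op A n),
      F m f -> (forall j, F n (g j)) ->
      F n (fun a => f (fun j => g j a))).

Definition conservative (A : Type) (F : opset A) : Prop :=
  forall n (f : op A n) (a : 'I_n -> A), F n f -> exists i : 'I_n, f a = a i.

(* r_ge F r  <->  r(F) >= r, i.e. every member of F of arity < r is a projection.
   (r(F) = omega iff r_ge F r for all r.) *)
Definition r_ge (A : Type) (F : opset A) (r : nat) : Prop :=
  forall m (f : op A m), m < r -> F m f -> is_projection f.

(* a in A^n_{<r}: |ran a| < r *)
Definition small_range (A : Type) (n r : nat) (a : 'I_n -> A) : Prop :=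
  exists s : list A, (length s < r)%coq_nat /\ forall i, List.In (a i) s.

Definition self_dual n (g : boolop n) : Prop :=
  forall x : 'I_n -> bool, g (fun i => ~~ x i) = ~~ g x.

Definition monotone n (g : boolop n) : Prop :=
  forall x y : 'I_n -> bool, (forall i, x i ==> y i) -> g x ==> g y.

Definition O1 : forall n, boolop n -> Prop :=
  fun n g => exists i : 'I_n, forall x, g x = x i.

Definition D1 : forall n, boolop n -> Prop :=
  fun n g => self_dual g /\ g (fun _ => false) = false.

Definition D2 : forall n, boolop n -> Prop :=
  fun n g => self_dual g /\ monotone g.

Definition L4 : forall n, boolop n -> Prop :=
  fun n g => exists S : {set 'I_n}, odd #|S| /\
               forall x, g x = \big[addb/false]_(i in S) x i.

(* Main.v *)
Require Import Defs.
From mathcomp Require Import all_boot.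
From Stdlib Require Import ClassicalEpsilon FunctionalExtensionality.
Set Implicit Arguments. Unset Strict Implicit. Unset Printing Implicit Defensive.


Definition fam3 {X : Type} (a b c : X) (j : 'I_3) : X :=
  match val j with 0 => a | 1 => b | _ => c end.
Definition fam4 {X : Type} (a b c d : X) (j : 'I_4) : X :=
  match val j with 0 => a | 1 => b | 2 => c | _ => d end.
Definition o0 : 'I_3 := @Ordinal 3 0 isT.
Definition o1 : 'I_3 := @Ordinal 3 1 isT.
Definition o2 : 'I_3 := @Ordinal 3 2 isT.
Definition q0 : 'I_4 := @Ordinal 4 0 isT.
Definition q1 : 'I_4 := @Ordinal 4 1 isT.
Definition q2 : 'I_4 := @Ordinal 4 2 isT.
Definition q3 : 'I_4 := @Ordinal 4 3 isT.

Definition maj (a b c : bool) := [|| a && b, b && c | a && c].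
Definition maj3 : boolop 3 := fun y => maj (y o0) (y o1) (y o2).
Definition xor3 : boolop 3 := fun y => y o0 (+) y o1 (+) y o2.
Definition m3 : boolop 3 := fun y => maj (y o0) (y o1) (~~ y o2).
Definition c4 : boolop 4 := fun y => if y q0 == y q1 then y q2 else y q3.

Lemma fam3_eta {X} (y : 'I_3 -> X) : y = fam3 (y o0) (y o1) (y o2).
Proof.
apply: functional_extensionality => -[[|[|[|m]]] Hm] //=; congr y; exact: val_inj.
Qed.

Lemma fam3_neg a b c : (fun i => ~~ fam3 a b c i) = fam3 (~~a) (~~b) (~~c).
Proof. by apply: functional_extensionality => -[[|[|[|m]]] Hm]. Qed.

Lemma fam3_const (c : bool) : fam3 c c c = fun _ => c.
Proof. by apply: functional_extensionality => -[[|[|[|m]]] Hm]. Qed.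

Definition isD1 n (g : boolop n) := self_dual g /\ g (fun _ => false) = false.

Lemma tern_det (h h' : boolop 3) : isD1 h -> isD1 h' ->
  h (fam3 true false false) = h' (fam3 true false false) ->
  h (fam3 false true false) = h' (fam3 false true false) ->
  h (fam3 false false true) = h' (fam3 false false true) ->
  forall y, h y = h' y.
Proof.
move=> [sd z] [sd' z'] e0 e1 e2 y.
have Hn : forall (k : boolop 3), self_dual k -> forall a b c,
   k (fam3 (~~a) (~~b) (~~c)) = ~~ k (fam3 a b c).
  by move=> k sk a b c; rewrite -fam3_neg sk.
rewrite (fam3_eta y).
case: (y o0); case: (y o1); case: (y o2).
- move: (Hn _ sd false false false) (Hn _ sd' false false false) => /= -> ->.
  by rewrite fam3_const z z'.
- move: (Hn _ sd false false true) (Hn _ sd' false false true) => /= -> ->.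
  by rewrite e2.
- move: (Hn _ sd false true false) (Hn _ sd' false true false) => /= -> ->.
  by rewrite e1.
- by [].
- move: (Hn _ sd true false false) (Hn _ sd' true false false) => /= -> ->.
  by rewrite e0.
- by [].
- by [].
- by rewrite fam3_const z z'.
Qed.

Lemma maj3D1 : isD1 maj3.
Proof. split => [x|] //; rewrite /maj3 /maj; by case: (x o0); case: (x o1); case: (x o2). Qed.
Lemma xor3D1 : isD1 xor3.
Proof. split => [x|] //; rewrite /xor3; by case: (x o0); case: (x o1); case: (x o2). Qed.
Lemma m3D1 : isD1 m3.
Proof. split => [x|] //; rewrite /m3 /maj; by case: (x o0); case: (x o1); case: (x o2). Qed.


Definition bclone (T : forall n, boolop n -> Prop) : Prop :=
 (forall n (i : 'I_n), T n (fun x => x i)) /\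
 (forall m n (f : boolop m) (g : 'I_m -> boolop n), T m f -> (forall j, T n (g j)) ->
    T n (fun x => f (fun j => g j x))) /\
 (forall n (g g' : boolop n), T n g -> (forall x, g x = g' x) -> T n g') /\
 (forall n (g : boolop n), T n g -> isD1 g).

Lemma Tcomp3 T n (f : boolop 3) (g0 g1 g2 : boolop n) : bclone T ->
  T 3 f -> T n g0 -> T n g1 -> T n g2 -> T n (fun x => f (fam3 (g0 x) (g1 x) (g2 x))).
Proof.
move=> [Tp [Tc [Te TD]]] Hf H0 H1 H2.
apply: Te (Tc _ _ f (fam3 g0 g1 g2) Hf _) _.
  by move=> -[[|[|[|m]]] Hm].
move=> x; congr f; by apply: functional_extensionality => -[[|[|[|m]]] Hm].
Qed.

Lemma Tcomp4 T n (f : boolop 4) (g0 g1 g2 g3 : boolop n) : bclone T ->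
  T 4 f -> T n g0 -> T n g1 -> T n g2 -> T n g3 ->
  T n (fun x => f (fam4 (g0 x) (g1 x) (g2 x) (g3 x))).
Proof.
move=> [Tp [Tc [Te TD]]] Hf H0 H1 H2 H3.
apply: Te (Tc _ _ f (fam4 g0 g1 g2 g3) Hf _) _.
  by move=> -[[|[|[|[|m]]]] Hm].
move=> x; congr f; by apply: functional_extensionality => -[[|[|[|[|m]]]] Hm].
Qed.

Lemma m3_xor T : bclone T -> T 3 m3 -> T 3 xor3.
Proof.
move=> HT Hm.
have HT' := HT; move: HT' => [Tp [Tc [Te TD]]].
have H1 : T 3 (fun x => m3 (fam3 (x o0) (x o2) (x o1))) by apply: Tcomp3.
have H2 := Tcomp3 HT Hm Hm H1 (Tp _ o0).
apply: Te H2 _ => x /=; rewrite /m3 /xor3 /maj /=.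
by case: (x o0); case: (x o1); case: (x o2).
Qed.

Lemma m3_maj T : bclone T -> T 3 m3 -> T 3 maj3.
Proof.
move=> HT Hm.
have HT' := HT; move: HT' => [Tp [Tc [Te TD]]].
have Hx := m3_xor HT Hm.
have H2 := Tcomp3 HT Hm (Tp _ o0) (Tp _ o1) Hx.
apply: Te H2 _ => x /=; rewrite /m3 /xor3 /maj3 /maj /=.
by case: (x o0); case: (x o1); case: (x o2).
Qed.

Lemma c4T T : bclone T -> T 3 maj3 -> T 3 xor3 -> T 4 c4.
Proof.
move=> HT Hm Hx.
have HT' := HT; move: HT' => [Tp [Tc [Te TD]]].
have H1 : T 4 (fun x => xor3 (fam3 (x q0) (x q1) (x q2))) by apply: Tcomp3.
have H2 := Tcomp3 HT Hm (Tp _ q2) (Tp _ q3) H1.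
apply: Te H2 _ => x /=; rewrite /c4 /xor3 /maj3 /maj /=.
by case: (x q0); case: (x q1); case: (x q2); case: (x q3).
Qed.

Definition part n (p q r : 'I_n -> bool) :=
  forall k, [|| p k && ~~ q k && ~~ r k, ~~ p k && q k && ~~ r k | ~~ p k && ~~ q k && r k].

Lemma pat T n (g : boolop n) p q r : bclone T -> T n g -> part p q r ->
  [/\ (~~ g p && ~~ g q && ~~ g r -> T 3 maj3),
      (g p && g q && g r -> T 3 xor3) &
      (g p && g q && ~~ g r -> T 3 m3)].
Proof.
move=> HT Hg Hpq.
have HT' := HT; move: HT' => [Tp [Tc [Te TD]]].
pose sel k : 'I_3 := if p k then o0 else if q k then o1 else o2.
pose h : boolop 3 := fun y => g (fun k => y (sel k)).
have Hh : T 3 h by apply: (Tc _ _ g (fun k y => y (sel k))) => // k; apply: Tp.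
have hD := TD _ _ Hh.
have ev : forall a b c : bool, h (fam3 a b c) =
   g (fun k => if p k then a else if q k then b else c).
  move=> a b c; rewrite /h; congr g; apply: functional_extensionality => k.
  by rewrite /sel; case: (p k); case: (q k).
have e0 : h (fam3 true false false) = g p.
  rewrite ev; congr g; apply: functional_extensionality => k.
  by move: (Hpq k); case: (p k); case: (q k); case: (r k).
have e1 : h (fam3 false true false) = g q.
  rewrite ev; congr g; apply: functional_extensionality => k.
  by move: (Hpq k); case: (p k); case: (q k); case: (r k).
have e2 : h (fam3 false false true) = g r.
  rewrite ev; congr g; apply: functional_extensionality => k.
  by move: (Hpq k); case: (p k); case: (q k); case: (r k).
split.
- move=> /andP [/andP [a b] c]; apply: Te Hh _; apply: tern_det hD maj3D1 _ _ _.
  + by rewrite e0 (negbTE a).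
  + by rewrite e1 (negbTE b).
  + by rewrite e2 (negbTE c).
- move=> /andP [/andP [a b] c]; apply: Te Hh _; apply: tern_det hD xor3D1 _ _ _.
  + by rewrite e0 a.
  + by rewrite e1 b.
  + by rewrite e2 c.
- move=> /andP [/andP [a b] c]; apply: Te Hh _; apply: tern_det hD m3D1 _ _ _.
  + by rewrite e0 a.
  + by rewrite e1 b.
  + by rewrite e2 (negbTE c).
Qed.

Lemma part_perm1 n (p q r : 'I_n -> bool) : part p q r -> part q r p.
Proof. by move=> H k; move: (H k); case: (p k); case: (q k); case: (r k). Qed.
Lemma part_perm2 n (p q r : 'I_n -> bool) : part p q r -> part p r q.
Proof. by move=> H k; move: (H k); case: (p k); case: (q k); case: (r k). Qed.

Lemma pat_all T n (g : boolop n) p q r : bclone T -> T n g -> part p q r ->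
  [/\ (~~ g p && ~~ g q && ~~ g r -> T 3 maj3),
      (g p && g q && g r -> T 3 xor3) &
      ((g p + g q + g r == 2)%N -> T 3 m3)].
Proof.
move=> HT Hg H.
have [A B C] := pat HT Hg H.
have [_ _ C1] := pat HT Hg (part_perm1 H).
have [_ _ C2] := pat HT Hg (part_perm1 (part_perm1 H)).
split => // E.
move: E C C1 C2; case: (g p); case: (g q); case: (g r) => //= _ X Y Z; by [apply: X | apply: Y | apply: Z].
Qed.


Lemma bigD1set n (S : {set 'I_n}) i (F : 'I_n -> bool) : i \in S ->
  \big[addb/false]_(k in S) F k = F i (+) \big[addb/false]_(k in S :\ i) F k.
Proof.
move=> Hi; rewrite (bigD1 i) //=; congr (_ (+) _); apply: eq_bigl => k.
by rewrite in_setD1 andbC.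
Qed.

Lemma big_true n (S : {set 'I_n}) : \big[addb/false]_(k in S) true = odd #|S|.
Proof. rewrite big_const; elim: #|S| => //= m ->; by case: (odd m). Qed.

Lemma add_setsum n (g : boolop n) :
  g (fun _ => false) = false ->
  (forall p q : 'I_n -> bool, (forall k, p k -> ~~ q k) ->
      g (fun k => p k || q k) = g p (+) g q) ->
  forall X : {set 'I_n}, g (fun k => k \in X) = \big[addb/false]_(k in X) g (fun l => l == k).
Proof.
move=> g0 add X; move Hc: #|X| => N; elim: N X Hc => [|N IH] X Hc.
  rewrite (cards0_eq Hc) big_set0 -g0; congr g; apply: functional_extensionality => k.
  by rewrite in_set0.
have /card_gt0P [i Hi] : 0 < #|X| by rewrite Hc.
have Hc' : #|X :\ i| = N by move: Hc; rewrite (cardsD1 i X) Hi add1n => -[].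
rewrite (bigD1set _ Hi) -(IH _ Hc').
rewrite addbC -add.
  congr g; apply: functional_extensionality => k; rewrite in_setD1.
  by case: (k =P i) => [->|_]; rewrite ?Hi ?eqxx ?orbT ?orbF.
by move=> k; rewrite in_setD1 => /andP [].
Qed.

Lemma AFF T n (g : boolop n) : bclone T -> ~ T 3 maj3 -> T n g -> L4 g.
Proof.
move=> HT Hmaj Hg.
have HT' := HT; move: HT' => [Tp [Tc [Te TD]]].
have [sd g0] := TD _ _ Hg.
have Hm3 : ~ T 3 m3 by move=> /(m3_maj HT).
have add : forall p q : 'I_n -> bool, (forall k, p k -> ~~ q k) ->
      g (fun k => p k || q k) = g p (+) g q.
  move=> p q Hd.
  have Hpart : part p q (fun k => ~~ (p k || q k)).
    by move=> k; case: (p k) (Hd k); case: (q k) => // /(_ erefl).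
  have [A B C] := pat_all HT Hg Hpart.
  have E := sd (fun k => p k || q k); simpl in E; rewrite E in A C.
  move: A C; case: (g p); case: (g q); case: (g (fun k => p k || q k)) => //= X Y.
  - by case: Hm3; apply: Y.
  - by case: Hm3; apply: Y.
  - by case: Hm3; apply: Y.
  - by case: Hmaj; apply: X.
have ss := add_setsum g0 add.
pose S := [set k | g (fun l => l == k)].
have gx : forall x, g x = \big[addb/false]_(i in S) x i.
  move=> x.
  have -> : x = (fun k => k \in [set k | x k]).
    by apply: functional_extensionality => k; rewrite inE.
  rewrite ss big_mkcond [RHS]big_mkcond; apply: eq_bigr => k _.
  by rewrite !inE; case: (x k); case: (g _).
exists S; split => //.
rewrite -big_true; have := gx (fun _ => true) => /= <-.
by have := sd (fun _ => false) => /= ->; rewrite g0.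
Qed.

Lemma big_unit n (S : {set 'I_n}) k :
  \big[addb/false]_(i in S) (i == k) = (k \in S).
Proof.
case Hk: (k \in S).
  rewrite (bigD1set _ Hk) eqxx big1 // => i; rewrite in_setD1 => /andP [/negbTE -> _] //.
by rewrite big1 // => i Hi; apply/negbTE; apply/eqP => E; move: Hk; rewrite -E Hi.
Qed.

Lemma NP T n (g : boolop n) : bclone T -> ~ T 3 maj3 -> ~ T 3 xor3 -> T n g -> O1 g.
Proof.
move=> HT Hmaj Hxor Hg.
have [S [oS gS]] := AFF HT Hmaj Hg.
have Hm3 : ~ T 3 m3 by move=> /(m3_xor HT).
have S1 : #|S| = 1.
  have : #|S| <= 1.
    rewrite leqNgt; apply/negP => H2.
    have /card_gt0P [i Hi] : 0 < #|S| by apply: leq_trans H2.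
    have /card_gt0P [j Hj] : 0 < #|S :\ i|.
      by move: H2; rewrite (cardsD1 i S) Hi.
    have Hji : j != i by move: Hj; rewrite in_setD1 => /andP [].
    have HjS : j \in S by move: Hj; rewrite in_setD1 => /andP [].
    have Hpart : part (fun k => k == i) (fun k => k == j) (fun k => ~~ (k == i) && ~~ (k == j)).
      move=> k; case: eqP => [->|_]; case: eqP => [E|_] //=.
      by move: Hji; rewrite E eqxx.
    have [_ B C] := pat_all HT Hg Hpart.
    have gi : g (fun k => k == i) by rewrite gS big_unit.
    have gj : g (fun k => k == j) by rewrite gS big_unit.
    move: B C; rewrite gi gj /=; case: (g _) => /= X Y.
    - by apply: Hxor; apply: X.
    - by apply: Hm3; apply: Y.
  move: oS; case: #|S| => [|[|]] //.
move/eqP: S1 => /cards1P [i Si].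
exists i => x; by rewrite gS Si big_set1.
Qed.


Lemma MON T n (g : boolop n) : bclone T -> ~ T 3 xor3 -> T n g -> monotone g.
Proof.
move=> HT Hxor Hg x y Hxy.
have HT' := HT; move: HT' => [Tp [Tc [Te TD]]].
have [sd g0] := TD _ _ Hg.
have Hm3 : ~ T 3 m3 by move=> /(m3_xor HT).
case Egx: (g x) => //=; case Egy: (g y) => //; exfalso.
have Hpart : part x (fun k => y k && ~~ x k) (fun k => ~~ y k).
  by move=> k; move: (Hxy k); case: (x k); case: (y k).
have [_ B C] := pat_all HT Hg Hpart.
have E := sd y; simpl in E; rewrite E Egx Egy /= in B C.
move: B C; case: (g _) => /= X Y.
- by apply: Hxor; apply: X.
- by apply: Hm3; apply: Y.
Qed.

Lemma O1T T n (g : boolop n) : bclone T -> O1 g -> T n g.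
Proof.
move=> [Tp [Tc [Te TD]]] [i Hi]; apply: Te (Tp _ i) _ => x; by rewrite Hi.
Qed.

Lemma L4T T n (g : boolop n) : bclone T -> T 3 xor3 -> L4 g -> T n g.
Proof.
move=> HT Hx [S [oS gS]].
have HT' := HT; move: HT' => [Tp [Tc [Te TD]]].
suff : forall N (S : {set 'I_n}), #|S| <= N -> odd #|S| ->
   T n (fun x => \big[addb/false]_(i in S) x i).
  by move/(_ _ S (leqnn _) oS) => H; apply: Te H _ => x; rewrite gS.
elim=> [|N IH] S' HS oS'.
  by move: HS oS'; rewrite leqn0 => /eqP ->.
have /card_gt0P [i Hi] : 0 < #|S'| by case: #|S'| oS'.
have Hc1 : #|S'| = (#|S' :\ i|).+1 by rewrite (cardsD1 i S') Hi.
case E1: #|S' :\ i| => [|m].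
  have : S' :\ i = set0 by apply: cards0_eq.
  move=> E2; apply: Te (Tp _ i) _ => x.
  by rewrite (bigD1set _ Hi) E2 big_set0 addbF.
have /card_gt0P [j Hj] : 0 < #|S' :\ i| by rewrite E1.
have Hc2 : #|S' :\ i| = (#|S' :\ i :\ j|).+1 by rewrite (cardsD1 j (S' :\ i)) Hj.
have H3 : T n (fun x => \big[addb/false]_(k in S' :\ i :\ j) x k).
  apply: IH.
  - by move: HS; rewrite Hc1 Hc2 ltnS => /ltnW.
  - by move: oS'; rewrite Hc1 Hc2 /= negbK.
have H4 := Tcomp3 HT Hx (Tp _ i) (Tp _ j) H3.
apply: Te H4 _ => x.
by rewrite /xor3 /= (bigD1set _ Hi) (bigD1set _ Hj) addbA.
Qed.


Lemma reduce T (K : forall n, boolop n -> Prop) : bclone T ->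
 (forall n m (g : boolop n) (psi : 'I_n -> 'I_m), K n g -> K m (fun y => g (fun k => y (psi k)))) ->
 (forall n g, n <= 2 -> K n g -> T n g) ->
 (forall p (g : boolop p.+3), K _ g ->
    (forall i j : 'I_p.+3, i != j -> T _ (fun x => g (fun k => if k == j then x i else x k))) ->
    T _ g) ->
 forall n g, K n g -> T n g.
Proof.
move=> HT Km Ks St n.
have HT' := HT; move: HT' => [Tp [Tc [Te TD]]].
elim: n {-2}n (leqnn n) => [|N IH] n Hn g Kg; first by apply: Ks => //; apply: leq_trans Hn _.
case: n Hn g Kg => [|[|[|p]]] Hn g Kg; try by apply: Ks.
apply: St => // i j Hij.
pose psi (k : 'I_p.+3) : 'I_p.+2 := odflt ord0 (unlift j (if k == j then i else k)).
have Hpsi : forall k, lift j (psi k) = if k == j then i else k.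
  move=> k; rewrite /psi.
  have Hne : (if k == j then i else k) != j by case: (k =P j) => [_|/eqP].
  case: unliftP => [l ->|E] //=.
  by move: Hne; rewrite E eqxx.
have Kg' := Km _ _ g psi Kg.
have Tg' := IH p.+2 Hn _ Kg'.
have := Tc _ _ _ (fun l x => x (lift j l)) Tg' (fun l => Tp _ _).
move=> H; apply: Te H _ => x /=.
congr g; apply: functional_extensionality => k; rewrite Hpsi.
by case: (k == j).
Qed.

Definition fam2 {X : Type} (a b : X) (j : 'I_2) : X := if val j == 0 then a else b.

Lemma D1small n (g : boolop n) : n <= 2 -> isD1 g -> O1 g.
Proof.
move=> Hn [sd g0].
have gT : g (fun _ => true) = true by have := sd (fun _ => false) => /= ->; rewrite g0.
case: n Hn g sd g0 gT => [|[|[|p]]] // _ g sd g0 gT.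
- exfalso; have := sd (fun _ => false).
  have -> : (fun i : 'I_0 => ~~ false) = (fun _ => false).
    by apply: functional_extensionality => -[].
  by rewrite g0.
- exists ord0 => x.
  have -> : x = (fun _ => x ord0).
    by apply: functional_extensionality => k; rewrite (ord1 k).
  by case: (x ord0).
- have eta : forall x : 'I_2 -> bool, x = fam2 (x ord0) (x ord_max).
    move=> x; apply: functional_extensionality => -[[|[|m]] Hm] //=; congr x; exact: val_inj.
  have neg : forall a b, g (fam2 (~~a) (~~b)) = ~~ g (fam2 a b).
    move=> a b; rewrite -sd; congr g; apply: functional_extensionality => -[[|[|m]] Hm] //.
  have c2 : forall c : bool, fam2 c c = (fun _ : 'I_2 => c).
    by move=> c; apply: functional_extensionality => -[[|[|m]] Hm].
  case Ea: (g (fam2 true false)).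
  + exists ord0 => x; rewrite (eta x) /=.
    case: (x ord0); case: (x ord_max); rewrite ?c2 //.
    by have := neg true false => /= ->; rewrite Ea.
  + exists ord_max => x; rewrite (eta x) /=.
    case: (x ord0); case: (x ord_max); rewrite ?c2 //.
    by have := neg true false => /= ->; rewrite Ea.
Qed.

Definition i0 p : 'I_p.+3 := @Ordinal p.+3 0 isT.
Definition i1 p : 'I_p.+3 := @Ordinal p.+3 1 isT.
Definition i2 p : 'I_p.+3 := @Ordinal p.+3 2 isT.

Lemma subst_eq n (g : boolop n) (x : 'I_n -> bool) i j : x i = x j ->
  g (fun k => if k == j then x i else x k) = g x.
Proof.
move=> E; congr g; apply: functional_extensionality => k.
by case: eqP => [->|].
Qed.

Lemma maj_pick (a b c G S1 S2 S3 : bool) :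
  ((a == b) ==> (S1 == G)) -> ((b ==> a) ==> (G ==> S1)) -> ((a ==> b) ==> (S1 ==> G)) ->
  ((b == c) ==> (S2 == G)) -> ((c ==> b) ==> (G ==> S2)) -> ((b ==> c) ==> (S2 ==> G)) ->
  ((c == a) ==> (S3 == G)) -> ((a ==> c) ==> (G ==> S3)) -> ((c ==> a) ==> (S3 ==> G)) ->
  maj S1 S2 S3 = G.
Proof. by case: a; case: b; case: c; case: G; case: S1; case: S2; case: S3. Qed.

Lemma c4_pick (a b c G S1 S2 S3 : bool) :
  ((a == b) ==> (S1 == G)) -> ((b == c) ==> (S2 == G)) -> ((c == a) ==> (S3 == G)) ->
  (if a == b then S1 else if b == c then S2 else S3) = G.
Proof. by case: a; case: b; case: c; case: G; case: S1; case: S2; case: S3. Qed.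

Lemma D2step T p (g : boolop p.+3) : bclone T -> T 3 maj3 -> D2 g ->
    (forall i j : 'I_p.+3, i != j -> T _ (fun x => g (fun k => if k == j then x i else x k))) ->
    T _ g.
Proof.
move=> HT Hm [sd mon] Hs.
have HT' := HT; move: HT' => [Tp [Tc [Te TD]]].
pose s (i j : 'I_p.+3) := fun x : 'I_p.+3 -> bool => g (fun k => if k == j then x i else x k).
have H01 : T _ (s (i0 p) (i1 p)) by apply: Hs.
have H12 : T _ (s (i1 p) (i2 p)) by apply: Hs.
have H20 : T _ (s (i2 p) (i0 p)) by apply: Hs.
have H := Tcomp3 HT Hm H01 H12 H20.
apply: Te H _ => x; rewrite /maj3 /=.
have F1 : forall i j, (x i == x j) ==> (s i j x == g x).
  by move=> i j; apply/implyP => /eqP E; rewrite /s subst_eq.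
have F2 : forall i j, (x j ==> x i) ==> (g x ==> s i j x).
  move=> i j; apply/implyP => E; apply: mon => k.
  by case: eqP => [->|]; rewrite ?implybb.
have F3 : forall i j, (x i ==> x j) ==> (s i j x ==> g x).
  move=> i j; apply/implyP => E; apply: mon => k.
  by case: eqP => [->|]; rewrite ?implybb.
apply: maj_pick; by [apply: F1 | apply: F2 | apply: F3 | rewrite eq_sym; apply: F1].
Qed.

Lemma D1step T p (g : boolop p.+3) : bclone T -> T 4 c4 -> isD1 g ->
    (forall i j : 'I_p.+3, i != j -> T _ (fun x => g (fun k => if k == j then x i else x k))) ->
    T _ g.
Proof.
move=> HT Hc _ Hs.
have HT' := HT; move: HT' => [Tp [Tc [Te TD]]].
pose s (i j : 'I_p.+3) := fun x : 'I_p.+3 -> bool => g (fun k => if k == j then x i else x k).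
have H01 : T _ (s (i0 p) (i1 p)) by apply: Hs.
have H12 : T _ (s (i1 p) (i2 p)) by apply: Hs.
have H20 : T _ (s (i2 p) (i0 p)) by apply: Hs.
have Hin := Tcomp4 HT Hc (Tp _ (i1 p)) (Tp _ (i2 p)) H12 H20.
have H := Tcomp4 HT Hc (Tp _ (i0 p)) (Tp _ (i1 p)) H01 Hin.
apply: Te H _ => x; rewrite /c4 /=.
have F1 : forall i j, (x i == x j) ==> (s i j x == g x).
  by move=> i j; apply/implyP => /eqP E; rewrite /s subst_eq.
apply: c4_pick; by [apply: F1 | rewrite eq_sym; apply: F1].
Qed.


Lemma D2_0 n (g : boolop n) : D2 g -> g (fun _ => false) = false.
Proof.
move=> [sd mon]; have := mon (fun _ => false) (fun _ => true) (fun _ => erefl).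
by have := sd (fun _ => false) => /= ->; case: (g _).
Qed.

Lemma classify T : bclone T -> exists P : forall n, boolop n -> Prop,
  (P = O1 \/ P = D1 \/ P = D2 \/ P = L4) /\
  (forall n g, T n g -> P n g) /\ (forall n g, P n g -> T n g) /\
  (~ T 3 maj3 -> ~ T 3 xor3 -> P = O1).
Proof.
move=> HT.
have HT' := HT; move: HT' => [Tp [Tc [Te TD]]].
case: (excluded_middle_informative (T 3 maj3)) => Hm;
case: (excluded_middle_informative (T 3 xor3)) => Hx.
- exists D1; split; first by right; left.
  split; first by move=> n g Hg; have := TD _ _ Hg.
  split; last by [].
  apply: reduce => //.
  * move=> n m g psi [sd g0]; split => // y; exact: sd.
  * by move=> n g Hn Hg; apply: O1T => //; apply: D1small.
  * by move=> p g Hg Hs; apply: D1step => //; apply: c4T.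
- exists D2; split; first by right; right; left.
  split.
    move=> n g Hg; split; first by case: (TD _ _ Hg).
    exact: MON Hx Hg.
  split; last by [].
  apply: reduce => //.
  * move=> n m g psi [sd mon]; split => [y|x y Hxy]; first exact: sd.
    by apply: mon => k; apply: Hxy.
  * move=> n g Hn Hg; apply: O1T => //; apply: D1small => //.
    by split; [case: Hg | apply: D2_0].
  * by move=> p g Hg Hs; apply: D2step.
- exists L4; split; first by right; right; right.
  split; first by move=> n g Hg; apply: AFF Hm Hg.
  split; last by [].
  by move=> n g Hg; apply: L4T.
- exists O1; split; first by left.
  split; first by move=> n g Hg; apply: NP Hm Hx Hg.
  split; last by [].
  by move=> n g Hg; apply: O1T.
Qed.


Definition tau (A : Type) n (f : op A n) : boolop n := fun x =>
  if excluded_middle_informative (forall u v : A, f (fun i => if x i then v else u) = v)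
  then true else false.

Lemma tau_spec A (F : opset A) : (exists x y : A, x <> y) -> is_clone F -> r_ge F 3 ->
  forall n f, F n f -> forall (b0 b1 : A) x,
  f (fun i => if x i then b1 else b0) = if tau f x then b1 else b0.
Proof.
move=> [a0 [a1 Ha]] [Fp Fc] hr n f Hf b0 b1 x.
pose sel i : 'I_2 := if x i then ord_max else ord0.
pose g : op A 2 := fun a => f (fun i => a (sel i)).
have Fg : F 2 g by apply: (Fc _ _ f (fun i a => a (sel i))) => // i; apply: Fp.
have [k Hk] := hr _ _ (isT : 2 < 3) Fg.
pose pr (u v : A) : 'I_2 -> A := fun j => if val j == 0 then u else v.
have E : forall u v, f (fun i => if x i then v else u) = pr u v k.
  move=> u v; rewrite -Hk /g; congr f; apply: functional_extensionality => i.
  by rewrite /sel; case: (x i).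
have [Ek|Ek] : val k = 0 \/ val k = 1 by case: k {Hk E} => -[|[|m]] //= _; [left|right].
  rewrite /tau; case: excluded_middle_informative => H.
    by exfalso; apply: Ha; rewrite -(H a0 a1) E /pr Ek.
  by rewrite E /pr Ek.
rewrite /tau; case: excluded_middle_informative => H.
  by rewrite H.
by exfalso; apply: H => u v; rewrite E /pr Ek.
Qed.

Lemma sig_inj (A : Type) (b0 b1 : A) (s t : bool) : b0 <> b1 ->
  (if s then b1 else b0) = (if t then b1 else b0) -> s = t.
Proof. by move=> H; case: s; case: t => // E; case: H. Qed.

Definition Tof (A : Type) (F : opset A) : forall n, boolop n -> Prop :=
  fun n g => exists f, F n f /\ forall x, tau f x = g x.

Lemma Tof_clone A (F : opset A) : (exists x y : A, x <> y) -> is_clone F ->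
  conservative F -> r_ge F 3 -> bclone (Tof F).
Proof.
move=> hA hcl hcons hr.
have ts := tau_spec hA hcl hr.
have [b0 [b1 Hb]] := hA.
have [Fp Fc] := hcl.
split.
  move=> n i; exists (fun a => a i); split; first exact: Fp.
  move=> x; apply: (sig_inj Hb); rewrite -ts //; exact: Fp.
split.
  move=> m n f g [ff [Hff Ef]] Hg.
  pose gg j := proj1_sig (constructive_indefinite_description _ (Hg j)).
  have Hgg : forall j, F n (gg j) /\ forall x, tau (gg j) x = g j x.
    move=> j; exact: (proj2_sig (constructive_indefinite_description _ (Hg j))).
  exists (fun a => ff (fun j => gg j a)); split.
    by apply: Fc => // j; case: (Hgg j).
  move=> x; apply: (sig_inj Hb); rewrite -ts; last by apply: Fc => // j; case: (Hgg j).
  have -> : (fun j => gg j (fun i => if x i then b1 else b0)) =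
            (fun j => if tau (gg j) x then b1 else b0).
    by apply: functional_extensionality => j; rewrite ts //; case: (Hgg j).
  rewrite ts // Ef; congr (if f _ then _ else _); apply: functional_extensionality => j.
  by case: (Hgg j) => _ ->.
split.
  move=> n g g' [f [Hf E]] E'; exists f; split => // x; by rewrite E E'.
move=> n g [f [Hf E]]; split.
  move=> x; rewrite -!E; apply: (sig_inj Hb); rewrite -ts //.
  have := ts _ _ Hf b1 b0 x.
  have -> : (fun i => if x i then b0 else b1) = (fun i => if ~~ x i then b1 else b0).
    by apply: functional_extensionality => i; case: (x i).
  by move=> ->; case: (tau f x).
rewrite -E; apply: (sig_inj Hb); rewrite -ts //=.
by have [i ->] := hcons _ f (fun _ => b0) Hf.
Qed.


Unset Implicit Arguments.

Theorem lemma7 (A : Type) (F : opset A)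
  (hA : exists x y : A, x <> y)
  (hclone : is_clone F) (hcons : conservative F)
  (hr : r_ge F 3) :
  exists P : forall n, boolop n -> Prop,
    (P = O1 \/ P = D1 \/ P = D2 \/ P = L4) /\
    exists tau : forall n, op A n -> boolop n,
      (* tau maps F into P *)
      (forall n (f : op A n), F n f -> P n (tau n f)) /\
      (* tau is surjective onto P *)
      (forall n (g : boolop n), P n g ->
         exists f : op A n, F n f /\ forall x, tau n f x = g x) /\
      (* for B = {b0,b1}, sigma^-1(0) = b0, sigma^-1(1) = b1, a = sigma^-1(x) *)
      (forall b0 b1 : A, b0 <> b1 ->
         forall n (f : op A n), F n f ->
         forall x : 'I_n -> bool,
           f (fun i => if x i then b1 else b0)
           = (if tau n f x then b1 else b0)) /\
      (* moreover part: r(F) >= r >= 4 *)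
      (forall r : nat, 4 <= r -> r_ge F r ->
         P = O1 /\
         forall n (f : op A n), F n f ->
           exists i : 'I_n, forall a : 'I_n -> A, small_range r a -> f a = a i).
Proof.
have HT := Tof_clone hA hclone hcons hr.
have ts := tau_spec hA hclone hr.
have [b0 [b1 Hb]] := hA.
have [Fp Fc] := hclone.
have [P [HP [TP [PT Ho]]]] := classify HT.
exists P; split => //; exists (fun n f => tau f); split.
  by move=> n f Hf; apply: TP; exists f.
split; first by move=> n g Hg; exact: PT _ _ Hg.
split; first by move=> c0 c1 _ n f Hf x; exact: ts.
move=> r Hr4 hrr.
have nproj : forall g : boolop 3, @Tof A F 3 g -> O1 g.
  move=> g [f [Hf E]]; have [i Hi] := hrr _ f (leq_trans (isT : 3 < 4) Hr4) Hf.
  exists i => x; rewrite -E; apply: (sig_inj Hb); rewrite -ts //.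
have nm : ~ Tof F maj3.
  move/nproj => [[[|[|[|m]]] Hm] Hi] //.
  - by have := Hi (fam3 true false false).
  - by have := Hi (fam3 false true false).
  - by have := Hi (fam3 false false true).
have nx : ~ Tof F xor3.
  move/nproj => [[[|[|[|m]]] Hm] Hi] //.
  - by have := Hi (fam3 true true false).
  - by have := Hi (fam3 true true false).
  - by have := Hi (fam3 false true true).
have PO := Ho nm nx.
split => // n f Hf.
have : P n (tau f) by apply: TP; exists f.
rewrite PO => -[i Hi].
exists i => a [s [Hs Hin]].
pose d := a i.
have Hidx : forall k, exists l : 'I_(length s), List.nth l s d = a k.
  move=> k; have [l [Hl E]] := List.In_nth s (a k) d (Hin k).
  by exists (Ordinal (introT ltP Hl)).
pose idx k := proj1_sig (constructive_indefinite_description _ (Hidx k)).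
have Eidx : forall k, List.nth (idx k) s d = a k.
  move=> k; exact: (proj2_sig (constructive_indefinite_description _ (Hidx k))).
pose h : op A (length s) := fun y => f (fun k => y (idx k)).
have Fh : F _ h by apply: (Fc _ _ f (fun k y => y (idx k))) => // k; apply: Fp.
have [j Hj] := hrr _ h (introT ltP Hs) Fh.
have Ha : f a = List.nth j s d.
  rewrite -(Hj (fun l => List.nth l s d)) /h; congr f.
  by apply: functional_extensionality => k; rewrite Eidx.
have Hij : idx i = j.
  apply/eqP; apply/negPn/negP => Hne.
  have := Hj (fun l => if l == j then b1 else b0).
  rewrite eqxx /h.
  have := ts _ _ Hf b0 b1 (fun k => idx k == j) => /= ->.
  by rewrite Hi (negbTE Hne).
by rewrite Ha -Hij Eidx.
Qed.
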